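(* Let $n\ge 4$, $\lambda=\frac{n-1}{2(n-2)}$, and consider $V_2\mathbb R^n=\mathrm{SO}(n)/\mathrm{SO}(n-2)$ with the decomposition $\mathfrak m=\mathfrak m_{12}\oplus\mathfrak m_{13}\oplus\mathfrak m_{23}$, $\mathfrak m_{12}=\mathbb R\xi_{12}$, $\mathfrak m_{13}=\mathrm{span}\{\xi_{1k}:3\le k\le n\}$, $\mathfrak m_{23}=\mathrm{span}\{\xi_{2k}:3\le k\le n\}$, and the (Einstein) metric $\Lambda=\mathrm{Id}_{\mathfrak m_{12}}+\lambda\,\mathrm{Id}_{\mathfrak m_{13}}+\lambda\,\mathrm{Id}_{\mathfrak m_{23}}$. A nonzero vector $X=a_{12}\xi_{12}+\sum_{k=3}^n(a_{1k}\xi_{1k}+a_{2k}\xi_{2k})$ satisfies $[X,\Lambda X]_{\mathfrak m}=0$ (i.e. $t\mapsto\exp(tX)\cdot o$ is a geodesic of this metric) if and only if either $a_{12}=0$ (i.e. $X\in\mathfrak m_{13}\oplus\mathfrak m_{23}$) or $X\in\mathbb R\xi_{12}$.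
   Context: $E_{ab}$ is the $n\times n$ matrix with $1$ in entry $(a,b)$ and $0$ elsewhere; $\xi_{ab}=E_{ab}-E_{ba}$; $\mathrm{SO}(n-2)$ acts on the last $n-2$ coordinates. $\mathfrak m$ is the orthogonal complement of $\mathfrak{so}(n-2)$ in $\mathfrak{so}(n)$ with respect to the negative of the Killing form $B$; the metric is $\langle X,Y\rangle=B(\Lambda X,Y)$; $[\cdot,\cdot]_{\mathfrak m}$ is the $\mathfrak m$-component of the bracket. *)

(* Defs.v *)
From HB Require Import structures.
From mathcomp Require Import all_boot all_order all_algebra.
Set Implicit Arguments. Unset Strict Implicit. Unset Printing Implicit Defensive.
Import Order.TTheory GRing.Theory Num.Theory.
Local Open Scope ring_scope.

(* Indices are 0-based: paper's index a corresponds to a.-1 here, so the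
   paper's xi_{12} is [xi 0 1] and SO(n-2) acts on indices 2..n-1. *)

Definition xi {R : ringType} (n a b : nat) : 'M[R]_n :=
  \matrix_(i, j) ((((i == a :> nat) && (j == b :> nat)))%:R
                  - (((i == b :> nat) && (j == a :> nat)))%:R).

Definition lieb {R : ringType} (n : nat) (X Y : 'M[R]_n) : 'M[R]_n :=
  X *m Y - Y *m X.

(* m-component: orthogonal projection (w.r.t. -Killing form, i.e. up to a
   positive factor the trace form -tr(XY)) of so(n) onto the complement m of
   so(n-2) (the lower-right block on indices >= 2): zero out that block. *)
Definition proj_m {R : ringType} (n : nat) (Y : 'M[R]_n) : 'M[R]_n :=
  \matrix_(i, j) (if (2 <= i)%N && (2 <= j)%N then 0 else Y i j).

Definition lam {R : fieldType} (n : nat) : R := (n.-1)%:R / (2 * (n - 2)%:R).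

(* The metric endomorphism Lambda = Id on m12 + l Id on m13 + l Id on m23,
   acting on m (entries of the so(n-2) block are sent to 0). *)
Definition Lam {R : ringType} (n : nat) (l : R) (X : 'M[R]_n) : 'M[R]_n :=
  \matrix_(i, j)
    (if (i < 2)%N && (j < 2)%N then X i j
     else if (i < 2)%N || (j < 2)%N then l * X i j
     else 0).

Definition mvec {R : ringType} (n : nat) (a12 : R) (a1 a2 : nat -> R)
  : 'M[R]_n :=
  a12 *: xi n 0 1 + \sum_(2 <= k < n) (a1 k *: xi n 0 k + a2 k *: xi n 1 k).

(* Main.v *)
Require Import Defs.
From HB Require Import structures.
From mathcomp Require Import all_boot all_order all_algebra.
From mathcomp Require Import zify ring.
Import Order.TTheory GRing.Theory Num.Theory.
Local Open Scope ring_scope.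

Section S.
Variable R : realFieldType.

Lemma sum_dr (n j : nat) (P : bool) (f : nat -> R) : (j < n)%N ->
  \sum_(2 <= k < n) f k * ((P && (j == k))%:R) = if P && (2 <= j)%N then f j else 0.
Proof.
move=> hj; case: P => /=; last by rewrite big1 // => k _; rewrite mulr0.
case: (leqP 2 j) => h.
  rewrite (bigD1_seq j) /= ?mem_index_iota ?h ?iota_uniq //.
  rewrite eqxx mulr1 big1 ?addr0 // => k /negPf; rewrite eq_sym => ->; by rewrite mulr0.
rewrite big1_seq // => k /andP[_]; rewrite mem_index_iota => /andP[hk _].
have -> : (j == k) = false by apply/negbTE; rewrite neq_ltn (leq_trans h hk).
by rewrite mulr0.
Qed.

Lemma sum_dl (n j : nat) (P : bool) (f : nat -> R) : (j < n)%N ->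
  \sum_(2 <= k < n) f k * (((j == k) && P)%:R) = if P && (2 <= j)%N then f j else 0.
Proof. by move=> hj; rewrite -(@sum_dr n j P f hj); apply: eq_bigr => k _; rewrite andbC. Qed.

Definition mvf (a12 : R) (a1 a2 : nat -> R) (i j : nat) : R :=
    a12 * (((i == 0%N) && (j == 1%N))%:R - ((i == 1%N) && (j == 0%N))%:R)
    + ((if (i == 0%N) && (2 <= j)%N then a1 j else 0)
       - (if (j == 0%N) && (2 <= i)%N then a1 i else 0))
    + ((if (i == 1%N) && (2 <= j)%N then a2 j else 0)
       - (if (j == 1%N) && (2 <= i)%N then a2 i else 0)).

Lemma mvecE n a12 (a1 a2 : nat -> R) (i j : 'I_n) :
  mvec n a12 a1 a2 i j = mvf a12 a1 a2 i j.
Proof.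
rewrite /mvec /mvf !mxE summxE.
under eq_bigr do rewrite !mxE !mulrBr.
rewrite big_split /= !sumrB !sum_dr ?sum_dl //.
by rewrite addrA.
Qed.

Lemma sum_only1 n (F : 'I_n -> R) (i1 : 'I_n) : nat_of_ord i1 = 1%N ->
  (forall m : 'I_n, nat_of_ord m != 1%N -> F m = 0) -> \sum_m F m = F i1.
Proof.
move=> h1 h; rewrite (bigD1 i1) //= big1 ?addr0 // => m hm; apply: h.
by apply: contra hm => /eqP e; apply/eqP/val_inj; rewrite /= e h1.
Qed.

Lemma sum_only1' n (F : 'I_n -> R) (i1 : 'I_n) : nat_of_ord i1 = 0%N ->
  (forall m : 'I_n, nat_of_ord m != 0%N -> F m = 0) -> \sum_m F m = F i1.
Proof.
move=> h1 h; rewrite (bigD1 i1) //= big1 ?addr0 // => m hm; apply: h.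
by apply: contra hm => /eqP e; apply/eqP/val_inj; rewrite /= e h1.
Qed.

Lemma ent0 n (hn : (4 <= n)%N) a12 (a1 a2 : nat -> R) l (k : 'I_n) (hk : (2 <= k)%N)
  (X : 'M[R]_n) (hX : forall i j : 'I_n, X i j = mvf a12 a1 a2 i j) :
  lieb X (Lam l X) (Ordinal (leq_trans (isT : (0 < 4)%N) hn)) k = a12 * a2 k * (l - 1).
Proof.
have k0 : (k == 0%N :> nat) = false by case: (k : nat) hk.
have k1 : (k == 1%N :> nat) = false by case: (k : nat) hk => [|[]].
have k2 : (k < 2)%N = false by rewrite ltnNge hk.
rewrite /lieb !mxE.
rewrite (@sum_only1 n _ (Ordinal (leq_trans (isT : (1 < 4)%N) hn))) //; last first.
  move=> [[|[|m]] hm] //= _; rewrite !mxE !hX /mvf /= ?k0 ?k1 ?k2 ?hk /=; ring.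
rewrite (@sum_only1 n _ (Ordinal (leq_trans (isT : (1 < 4)%N) hn))) //; last first.
  move=> [[|[|m]] hm] //= _; rewrite !mxE !hX /mvf /= ?k0 ?k1 ?k2 ?hk /=; ring.
rewrite !mxE !hX /mvf /= ?k0 ?k1 ?k2 ?hk /=; ring.
Qed.

Lemma ent1 n (hn : (4 <= n)%N) a12 (a1 a2 : nat -> R) l (k : 'I_n) (hk : (2 <= k)%N)
  (X : 'M[R]_n) (hX : forall i j : 'I_n, X i j = mvf a12 a1 a2 i j) :
  lieb X (Lam l X) (Ordinal (leq_trans (isT : (1 < 4)%N) hn)) k = - a12 * a1 k * (l - 1).
Proof.
have k0 : (k == 0%N :> nat) = false by case: (k : nat) hk.
have k1 : (k == 1%N :> nat) = false by case: (k : nat) hk => [|[]].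
have k2 : (k < 2)%N = false by rewrite ltnNge hk.
rewrite /lieb !mxE.
rewrite (@sum_only1' n _ (Ordinal (leq_trans (isT : (0 < 4)%N) hn))) //; last first.
  move=> [[|[|m]] hm] //= _; rewrite !mxE !hX /mvf /= ?k0 ?k1 ?k2 ?hk /=; ring.
rewrite (@sum_only1' n _ (Ordinal (leq_trans (isT : (0 < 4)%N) hn))) //; last first.
  move=> [[|[|m]] hm] //= _; rewrite !mxE !hX /mvf /= ?k0 ?k1 ?k2 ?hk /=; ring.
rewrite !mxE !hX /mvf /= ?k0 ?k1 ?k2 ?hk /=; ring.
Qed.
Lemma proj_lt2 n (Y : 'M[R]_n) (i j : 'I_n) : (i < 2)%N -> proj_m Y i j = Y i j.
Proof. by move=> h; rewrite mxE leqNgt h. Qed.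

Lemma proj0 n : proj_m (0 : 'M[R]_n) = 0.
Proof. by apply/matrixP => i j; rewrite !mxE; case: ifP. Qed.

Lemma lam_ne1 n : (4 <= n)%N -> lam n - 1 != 0 :> R.
Proof.
move=> hn; apply/eqP => h.
have hd : (2 * (n-2)%:R : R) != 0.
  by rewrite mulf_neq0 // pnatr_eq0; apply/eqP; lia.
have h2 : (n.-1)%:R = (2 * (n - 2)%:R : R).
  move/subr0_eq: h; rewrite /lam => h.
  by rewrite -(divfK hd (n.-1)%:R) h mul1r.
move: h2; rewrite -natrM => /eqP; rewrite eqr_nat => /eqP; lia.
Qed.
End S.

Theorem mainTheorem4 (R : realFieldType) (n : nat) (hn : (4 <= n)%N)
    (a12 : R) (a1 a2 : nat -> R) :
  let X : 'M[R]_n := mvec n a12 a1 a2 in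
  X != 0 ->
  (proj_m (lieb X (Lam (lam n) X)) = 0 <->
   (a12 = 0 \/ exists c : R, X = c *: xi n 0 1)).
Proof.
move=> X _.
have hX : forall i j : 'I_n, X i j = @mvf R a12 a1 a2 i j by move=> i j; apply: mvecE.
have hl := @lam_ne1 R n hn.
split.
- move=> H.
  have hk : forall k, (2 <= k)%N -> (k < n)%N -> a12 * a1 k = 0 /\ a12 * a2 k = 0.
    move=> k k2 kn.
    have e0 := congr1 (fun M : 'M[R]_n => M (Ordinal (leq_trans (isT : (0 < 4)%N) hn)) (Ordinal kn)) H.
    have e1 := congr1 (fun M : 'M[R]_n => M (Ordinal (leq_trans (isT : (1 < 4)%N) hn)) (Ordinal kn)) H.
    move: e0 e1 => /=.
    rewrite !proj_lt2 // (@ent0 R n hn a12 a1 a2 (lam n) (Ordinal kn) k2 X hX).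
    rewrite (@ent1 R n hn a12 a1 a2 (lam n) (Ordinal kn) k2 X hX) !mxE /= => e0 e1.
    split.
      apply/(mulIf hl); rewrite mul0r.
      have: - (a12 * a1 k * (lam n - 1)) = 0 by rewrite -e1 !mulNr.
      by move/eqP; rewrite oppr_eq0 => /eqP.
    by apply/(mulIf hl); rewrite mul0r.
  case: (eqVneq a12 0) => [->|ha]; [by left|right].
  exists a12; rewrite /X /mvec big_nat big1 ?addr0 // => k /andP[k2 kn].
  have [h1 h2] := hk k k2 kn.
  move/eqP: h1; rewrite mulf_eq0 (negbTE ha) /= => /eqP ->.
  move/eqP: h2; rewrite mulf_eq0 (negbTE ha) /= => /eqP ->.
  by rewrite !scale0r addr0.
- clearbody X; case => [a0 | [c hc]].
  + have -> : Lam (lam n) X = lam n *: X.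
      apply/matrixP => i j; rewrite !mxE !hX /mvf a0.
      case: i j => [[|[|i]] hi] [[|[|j]] hj] /=; ring.
    by rewrite /lieb -scalemxAl -scalemxAr subrr proj0.
  + have -> : Lam (lam n) X = X.
      rewrite hc; apply/matrixP => i j; rewrite !mxE.
      case: i j => [[|[|i]] hi] [[|[|j]] hj] /=; ring.
    by rewrite /lieb subrr proj0.
Qed.
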